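(* Let $F$ be a face of $\delta\mathcal{A}_{\bm o}$ and let $\bm a,\bm b\in\operatorname{relint}(F)$. Then (i) the parallel translations $\mathcal{A}_{\bm a}$ and $\mathcal{A}_{\bm b}$ are normally equivalent and combinatorially equivalent; (ii) the conings $c\mathcal{A}_{\bm a}$ and $c\mathcal{A}_{\bm b}$ are combinatorially equivalent; (iii) the elementary lifts $\mathcal{A}^{\bm a}$ and $\mathcal{A}^{\bm b}$ are combinatorially equivalent.
   Context: Fix nonzero vectors $\bm u_1,\dots,\bm u_m\in\mathbb{R}^n$ (repetitions and parallel vectors allowed). Derived arrangement: a circuit is a subset $C\subseteq[m]$ such that the indexed family $\{\bm u_i: i\in C\}$ is a minimal linearly dependent family; for each circuit fix $\bm c^C\in\mathbb{R}^m$ with $\sum_i c_i\bm u_i=\bm 0$ and $c_i\ne 0\iff i\in C$. The derived arrangement $\delta\mathcal{A}_{\bm o}$ is the arrangement in $\mathbb{R}^m$ of hyperplanes $\langle\bm c^C,\bm y\rangle=0$ over all circuits $C$; its open faces are the nonempty sets $\{\bm y:\operatorname{sign}\langle\bm c^C,\bm y\rangle=\epsilon_C\ \forall C\}$ for fixed signs $\epsilon_C$, its faces are their closures, and $\operatorname{relint}(F)$ is the open face with closure $F$. Arrangements: for $\bm a\in\mathbb{R}^m$, the parallel translation $\mathcal{A}_{\bm a}$ is the indexed family of affine hyperplanes $H_i=\{\bm x\in\mathbb{R}^n:\langle\bm u_i,\bm x\rangle=a_i\}$, $i=1,\dots,m$; the coning $c\mathcal{A}_{\bm a}$ is the family in $\mathbb{R}^{n+1}$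 of the $m+1$ linear hyperplanes $\{(\bm x,x_{n+1}):\langle\bm u_i,\bm x\rangle+a_ix_{n+1}=0\}$, $i=1,\dots,m$, together with $K_0=\{x_{n+1}=0\}$; the elementary lift $\mathcal{A}^{\bm a}$ is the family in $\mathbb{R}^{n+1}$ of the $m$ hyperplanes $\{\langle\bm u_i,\bm x\rangle+a_ix_{n+1}=0\}$, $i=1,\dots,m$. For an arrangement $\mathcal{A}$ of finitely many affine hyperplanes $\{\bm z:\langle\bm w_i,\bm z\rangle=d_i\}$, the open faces are the nonempty subsets of points having the same sign vector $(\operatorname{sign}(\langle\bm w_i,\bm z\rangle-d_i))_i$, the faces are their closures, and the face poset $\mathcal{F}(\mathcal{A})$ is the set of faces ordered by inclusion. Two arrangements are combinatorially equivalent if their face posets are isomorphic. For a nonempty convex polyhedron $P$, $h_P(\bm u)=\sup_{\bm x\in P}\langle\bm u,\bm x\rangle$, $N_P(\bm x)=\{\bm u:\langle\bm u,\bm x\rangle=h_P(\bm u)\}$ for $\bm x\in P$, $N_P(G)=N_P(\bm x)$ for $\bm x\in\operatorname{relint}(G)$, and the normal fan $\mathcal{N}(P)$ is the set of all $N_P(G)$, $G$ a nonempty face; $P,Q$ are normally equivalent if $\mathcal{N}(P)=\mathcal{N}(Q)$. Two arrangements $\mathcal{A},\mathcal{A}'$ in the same $\mathbb{R}^n$ are normally equivalent if there is an order-preserving bijection $\Psi:\mathcal{F}(\mathcal{A})\to\mathcal{F}(\mathcal{A}')$ such that $F$ and $\Psi(F)$ are normally equivalent for every face $F$. *)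

(* Defs.v *)
From HB Require Import structures.
From mathcomp Require Import all_boot all_order all_algebra.
From mathcomp Require Import all_classical all_reals all_analysis.

Set Implicit Arguments.
Unset Strict Implicit.
Unset Printing Implicit Defensive.

Import Order.TTheory GRing.Theory Num.Theory.
Import numFieldNormedType.Exports.
Local Open Scope classical_set_scope.
Local Open Scope ring_scope.

Section Defs.
Variable R : realType.

Definition dotv (k : nat) (u x : 'rV[R]_k) : R := \sum_(i < k) u 0 i * x 0 i.

(* An arrangement in R^k: hyperplanes {z | <w i, z> = d i} for the indices i
   in the index set A (a subset of an index type I). *)
Definition same_sign (k : nat) (I : Type) (A : set I) (w : I -> 'rV[R]_k)
  (d : I -> R) (x y : 'rV[R]_k) : Prop :=
  forall i, A i -> Num.sg (dotv (w i) x - d i) = Num.sg (dotv (w i) y - d i).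

Definition arr_open_faces (k : nat) (I : Type) (A : set I) (w : I -> 'rV[R]_k)
  (d : I -> R) : set (set 'rV[R]_k) :=
  [set O | exists x, O = [set y | same_sign A w d x y]].

(* faces: closures of open faces; the face poset is this set ordered by `<=` *)
Definition arr_faces (k : nat) (I : Type) (A : set I) (w : I -> 'rV[R]_k)
  (d : I -> R) : set (set 'rV[R]_k) :=
  [set closure O | O in arr_open_faces A w d].

Definition arr_relint (k : nat) (I : Type) (A : set I) (w : I -> 'rV[R]_k)
  (d : I -> R) (F : set 'rV[R]_k) : set 'rV[R]_k :=
  [set y | exists2 O, arr_open_faces A w d O & closure O = F /\ O y].

Definition poset_iso (k k' : nat) (FA : set (set 'rV[R]_k))
  (FB : set (set 'rV[R]_k')) : Prop :=
  exists Psi : set 'rV[R]_k -> set 'rV[R]_k',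
    [/\ (forall F, FA F -> FB (Psi F)),
        (forall F G, FA F -> FA G -> Psi F = Psi G -> F = G),
        (forall G', FB G' -> exists2 F, FA F & Psi F = G') &
        (forall F G, FA F -> FA G -> (F `<=` G <-> Psi F `<=` Psi G))].

Definition support_fun (k : nat) (P : set 'rV[R]_k) (u : 'rV[R]_k) : \bar R :=
  ereal_sup [set (dotv u x)%:E | x in P].

Definition normal_cone (k : nat) (P : set 'rV[R]_k) (x : 'rV[R]_k)
  : set 'rV[R]_k := [set u | (dotv u x)%:E = support_fun P u].

Definition poly_faces (k : nat) (P : set 'rV[R]_k) : set (set 'rV[R]_k) :=
  [set G | exists (c : 'rV[R]_k) (c0 : R),
     (forall x, P x -> dotv c x <= c0) /\
     G = [set x | P x /\ dotv c x = c0] /\ G !=set0].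

Definition aff_hull (k : nat) (G : set 'rV[R]_k) : set 'rV[R]_k :=
  [set z | exists (s : seq ('rV[R]_k * R)),
     [/\ (forall p, p \in s -> G p.1),
         \sum_(p <- s) p.2 = 1 &
         z = \sum_(p <- s) p.2 *: p.1]].

Definition relint (k : nat) (G : set 'rV[R]_k) : set 'rV[R]_k :=
  [set x | G x /\ exists2 N, nbhs x N & N `&` aff_hull G `<=` G].

Definition normal_fan (k : nat) (P : set 'rV[R]_k) : set (set 'rV[R]_k) :=
  [set C | exists2 G, poly_faces P G &
     exists2 x, relint G x & C = normal_cone P x].

Definition normally_equiv_poly (k : nat) (P Q : set 'rV[R]_k) : Prop :=
  normal_fan P = normal_fan Q.

Definition normally_equiv_arr (k : nat) (FA FB : set (set 'rV[R]_k)) : Prop :=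
  exists Psi : set 'rV[R]_k -> set 'rV[R]_k,
    [/\ (forall F, FA F -> FB (Psi F)),
        (forall F G, FA F -> FA G -> Psi F = Psi G -> F = G),
        (forall G', FB G' -> exists2 F, FA F & Psi F = G'),
        (forall F G, FA F -> FA G -> F `<=` G -> Psi F `<=` Psi G) &
        (forall F, FA F -> normally_equiv_poly F (Psi F))].

Variables (n m : nat) (u : 'I_m -> 'rV[R]_n).

Definition circuit (C : {set 'I_m}) : Prop :=
  ~~ free [seq u i | i in C] /\
  (forall D : {set 'I_m}, D \proper C -> free [seq u i | i in D]).

Definition circuit_vectors (c : {set 'I_m} -> 'rV[R]_m) : Prop :=
  forall C, circuit C ->
    \sum_(i < m) c C 0 i *: u i = 0 /\ (forall i, (c C 0 i != 0) = (i \in C)).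

Definition derived_faces (c : {set 'I_m} -> 'rV[R]_m) :=
  arr_faces (@circuit) c (fun _ => 0).
Definition derived_relint (c : {set 'I_m} -> 'rV[R]_m) (F : set 'rV[R]_m) :=
  arr_relint (@circuit) c (fun _ => 0) F.

Definition transl_faces (a : 'rV[R]_m) :=
  arr_faces [set: 'I_m] u (fun i => a 0 i).

(* coning cA_a in R^(n+1): points (x, x_{n+1}) = row_mx x (x_{n+1}) *)
Definition cone_normal (a : 'rV[R]_m) (i : option 'I_m) : 'rV[R]_(n + 1) :=
  match i with
  | Some j => row_mx (u j) (const_mx (a 0 j) : 'rV[R]_1)
  | None => row_mx 0 (const_mx 1 : 'rV[R]_1)
  end.
Definition cone_faces (a : 'rV[R]_m) :=
  arr_faces [set: option 'I_m] (cone_normal a) (fun _ => 0).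

Definition lift_faces (a : 'rV[R]_m) :=
  arr_faces [set: 'I_m] (fun i => row_mx (u i) (const_mx (a 0 i) : 'rV[R]_1))
    (fun _ => 0).

End Defs.

(* Main.v *)
Require Import Defs.
From HB Require Import structures.
From mathcomp Require Import all_boot all_order all_algebra.
From mathcomp Require Import all_classical all_reals all_analysis.
From mathcomp Require Import ring lra.

Import Order.TTheory GRing.Theory Num.Theory.
Import numFieldNormedType.Exports.
Local Open Scope classical_set_scope.
Local Open Scope ring_scope.
Set Implicit Arguments.
Unset Strict Implicit.
Unset Printing Implicit Defensive.

Section Farkas.
Variable R : realFieldType.
Variable Y : lmodType R.
Definition linf (f : Y -> R) := forall c y z, f (c *: y + z) = c * f y + f z.

Lemma linf0 f : linf f -> f 0 = 0.
Proof. move=> h; have := h 1 0 0; rewrite scaler0 addr0 mul1r; lra. Qed.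
Lemma linfZ f c y : linf f -> f (c *: y) = c * f y.
Proof. move=> h; by rewrite -[c *: y]addr0 h linf0 // addr0. Qed.
Lemma linfD f y z : linf f -> f (y + z) = f y + f z.
Proof. by move=> h; have := h 1 y z; rewrite scale1r mul1r. Qed.
Lemma linfB f y z : linf f -> f (y - z) = f y - f z.
Proof. move=> h; by rewrite linfD // -scaleN1r linfZ // mulN1r. Qed.

Lemma farkas k : forall (fs : nat -> Y -> R) (g : Y -> R),
  (forall j, linf (fs j)) -> linf g ->
  ~ (exists y, (forall j, (j < k)%N -> 0 <= fs j y) /\ g y < 0) ->
  exists mu : nat -> R, (forall j, 0 <= mu j) /\
     forall y, g y = \sum_(j < k) mu j * fs j y.
Proof.
elim: k => [|k IH] fs g hfs hg hno.
  exists (fun _ => 0); split => // y; rewrite big_ord0.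
  apply/eqP; rewrite eq_le; apply/andP; split; rewrite leNgt; apply/negP => hy.
    apply: hno; exists (- y); split => [[]//|].
    by rewrite -scaleN1r linfZ // mulN1r oppr_lt0.
  by apply: hno; exists y; split.
have [[y [hy gy]]|hno'] := pselect (exists y, (forall j, (j < k)%N -> 0 <= fs j y) /\ g y < 0); last first.
  have [mu [mu0 hmu]] := IH fs g hfs hg hno'.
  exists (fun j => if (j < k)%N then mu j else 0); split.
    by move=> j; case: ifP.
  move=> z; rewrite big_ord_recr /= ltnn mul0r addr0 hmu.
  by apply: eq_bigr => i _; rewrite ltn_ord.
have fky : fs k y < 0.
  rewrite ltNge; apply/negP => h; apply: hno; exists y; split => // j.
  by rewrite ltnS leq_eqVlt => /orP[/eqP->//|/hy].
pose fs' j := fun z => fs j z - (fs j y / fs k y) * fs k z.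
pose g' := fun z => g z - (g y / fs k y) * fs k z.
have lin' : forall (f : Y -> R) r, linf f -> linf (fun z => f z - r * fs k z).
  move=> f r hf c a b /=; rewrite hf (hfs k); ring.
have [mu [mu0 hmu]] : exists mu : nat -> R, (forall j, 0 <= mu j) /\
     forall z, g' z = \sum_(j < k) mu j * fs' j z.
  apply: IH => [j||]; [exact: lin'|exact: lin'|].
  move=> [z [hz gz]]; apply: hno.
  exists (z - (fs k z / fs k y) *: y); split.
    move=> j; rewrite ltnS leq_eqVlt => /orP[/eqP->|/hz].
      rewrite linfB // linfZ // divfK ?subrr // lt_eqF //.
    rewrite /fs' linfB // linfZ //.
    suff -> : fs j z - fs k z / fs k y * fs j y = fs j z - fs j y / fs k y * fs k z by [].
    ring.
  rewrite linfB // linfZ //; move: gz; rewrite /g'.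
  suff -> : g z - fs k z / fs k y * g y = g z - g y / fs k y * fs k z by [].
  ring.
pose muk := (g y - \sum_(j < k) mu j * fs j y) / fs k y.
exists (fun j => if (j < k)%N then mu j else muk); split.
  move=> j; case: ifP => // _; rewrite /muk ler_ndivlMr // mul0r subr_le0.
  apply: le_trans (ltW gy) _; apply: sumr_ge0 => i _; apply: mulr_ge0 => //.
  exact: hy.
move=> z; rewrite big_ord_recr /= ltnn.
have : g' z = \sum_(j < k) mu j * fs' j z by [].
rewrite /g' /fs' => e.
have -> : \sum_(i < k) (if (i < k)%N then mu i else muk) * fs i z = \sum_(i < k) mu i * fs i z.
  by apply: eq_bigr => i _; rewrite ltn_ord.
have : \sum_(j < k) mu j * (fs j z - fs j y / fs k y * fs k z) =
   \sum_(j < k) mu j * fs j z - (\sum_(j < k) mu j * fs j y) / fs k y * fs k z.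
  rewrite !mulr_suml -sumrB; apply: eq_bigr => i _; ring.
move=> e2; rewrite e2 in e.
have fk0 : fs k y != 0 by rewrite lt_eqF.
rewrite /muk; move/eqP: e; rewrite subr_eq => /eqP ->.
field. done.
Qed.
End Farkas.

Section Dot.
Variable R : realType.
Implicit Types (k : nat).

Lemma dotvDr k (w x y : 'rV[R]_k) : dotv w (x + y) = dotv w x + dotv w y.
Proof. by rewrite /dotv -big_split; apply: eq_bigr => i _; rewrite mxE mulrDr. Qed.
Lemma dotvZr k (w x : 'rV[R]_k) c : dotv w (c *: x) = c * dotv w x.
Proof. by rewrite /dotv mulr_sumr; apply: eq_bigr => i _; rewrite mxE mulrCA. Qed.
Lemma dotvNr k (w x : 'rV[R]_k) : dotv w (- x) = - dotv w x.
Proof. by rewrite -scaleN1r dotvZr mulN1r. Qed.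
Lemma dotvBr k (w x y : 'rV[R]_k) : dotv w (x - y) = dotv w x - dotv w y.
Proof. by rewrite dotvDr dotvNr. Qed.
Lemma dotv0r k (w : 'rV[R]_k) : dotv w 0 = 0.
Proof. by rewrite /dotv big1 // => i _; rewrite mxE mulr0. Qed.
Lemma dotvDl k (w w' x : 'rV[R]_k) : dotv (w + w') x = dotv w x + dotv w' x.
Proof. by rewrite /dotv -big_split; apply: eq_bigr => i _; rewrite mxE mulrDl. Qed.
Lemma dotvZl k (w x : 'rV[R]_k) c : dotv (c *: w) x = c * dotv w x.
Proof. by rewrite /dotv mulr_sumr; apply: eq_bigr => i _; rewrite mxE mulrA. Qed.
Lemma dotv0l k (x : 'rV[R]_k) : dotv 0 x = 0.
Proof. by rewrite /dotv big1 // => i _; rewrite mxE mul0r. Qed.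
Lemma dotv_suml k (I : Type) (r : seq I) (P : pred I) (F : I -> 'rV[R]_k) x :
  dotv (\sum_(i <- r | P i) F i) x = \sum_(i <- r | P i) dotv (F i) x.
Proof.
elim: r => [|h r IH]; first by rewrite !big_nil dotv0l.
by rewrite !big_cons; case: ifP => _ //; rewrite dotvDl IH.
Qed.
Lemma dotv_sumr k (I : Type) (r : seq I) (P : pred I) (F : I -> 'rV[R]_k) w :
  dotv w (\sum_(i <- r | P i) F i) = \sum_(i <- r | P i) dotv w (F i).
Proof.
elim: r => [|h r IH]; first by rewrite !big_nil dotv0r.
by rewrite !big_cons; case: ifP => _ //; rewrite dotvDr IH.
Qed.
Lemma dotv_self_eq0 k (v : 'rV[R]_k) : dotv v v = 0 -> v = 0.
Proof.
move=> /eqP; rewrite /dotv psumr_eq0 => [/allP h|i _]; last by rewrite -expr2 sqr_ge0.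
apply/matrixP => i j; rewrite mxE ord1.
by have /(_ (mem_index_enum j))/implyP/(_ isT) := h j; rewrite mulf_eq0 orbb => /eqP.
Qed.
Lemma dotv_row_mx k1 k2 (w1 x1 : 'rV[R]_k1) (w2 x2 : 'rV[R]_k2) :
  dotv (row_mx w1 w2) (row_mx x1 x2) = dotv w1 x1 + dotv w2 x2.
Proof.
rewrite /dotv big_split_ord /=; congr (_ + _); apply: eq_bigr => i _;
  by rewrite ?row_mxEl ?row_mxEr.
Qed.
Lemma dotv_const1 (a : R) (z : 'rV[R]_1) : dotv (const_mx a) z = a * z 0 0.
Proof. by rewrite /dotv big_ord1 mxE. Qed.
End Dot.

Section Motzkin.
Variables (R : realType) (n m : nat) (u : 'I_m -> 'rV[R]_n).

Definition Obs (l s a : 'I_m -> R) : Prop :=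
  [/\ \sum_i l i *: u i = 0, (forall i, 0 <= l i * s i) &
   ((exists i, s i != 0 /\ l i != 0) /\ 0 <= \sum_i l i * a i \/
    (forall i, s i != 0 -> l i = 0) /\ \sum_i l i * a i != 0)].

Definition Yt := ('rV[R]_n * R^o * R^o)%type.
Definition yx (y : Yt) : 'rV[R]_n := y.1.1.
Definition yt (y : Yt) : R := y.1.2.
Definition ys (y : Yt) : R := y.2.

Definition ffs (s a : 'I_m -> R) (j : nat) (y : Yt) : R :=
  if @insub _ _ 'I_m j is Some i then
    (if s i == 0 then dotv (u i) (yx y) - a i * yt y
     else s i * (dotv (u i) (yx y) - a i * yt y) - ys y)
  else if @insub _ _ 'I_m (j - m)%N is Some i then
    (if s i == 0 then - (dotv (u i) (yx y) - a i * yt y) else 0)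
  else if j == (m + m)%N then yt y - ys y else 0.

Lemma ffs_lin s a j : linf (ffs s a j).
Proof.
move=> c y z; rewrite /ffs /yx /yt /ys.
have sc : forall r : R^o, c *: r = c * r by [].
case: insubP => [i _ _|_]; first by case: ifP => _ /=; rewrite dotvDr dotvZr !sc; ring.
case: insubP => [i _ _|_]; first by case: ifP => _ /=; [rewrite dotvDr dotvZr !sc; ring|rewrite mulr0 addr0].
by case: ifP => _ /=; rewrite ?sc; ring.
Qed.

Definition lamf (s : 'I_m -> R) (mu : nat -> R) (i : 'I_m) : R :=
  if s i == 0 then mu i - mu (m + i)%N else mu i * s i.

Definition nzm (s : 'I_m -> R) (mu : nat -> R) (i : 'I_m) : R :=
  if s i == 0 then 0 else mu i.

Lemma ffs_sum s a (mu : nat -> R) y :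
  \sum_(j < (m + m).+1) mu j * ffs s a j y =
  \sum_i (lamf s mu i * (dotv (u i) (yx y) - a i * yt y)
           - ys y * nzm s mu i)
  + mu (m + m)%N * (yt y - ys y).
Proof.
rewrite big_ord_recr /=; congr (_ + _); last first.
  rewrite /ffs insubF ?ltnNge ?leq_addr // insubF ?addKn ?ltnn // eqxx /yx /yt /ys //.
rewrite big_split_ord /= -big_split /=; apply: eq_bigr => i _.
rewrite /ffs /= valK insubF ?ltnNge ?leq_addr // addKn valK /lamf /yx /yt /ys.
rewrite /nzm; case: ifP => _; ring.
Qed.

Lemma sg_pos_eq (s x : R) : (s = 1 \/ s = -1) -> 0 < s * x -> Num.sg x = s.
Proof.
move=> [->|->]; rewrite ?mul1r ?mulN1r ?oppr_gt0 => h.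
  by rewrite gtr0_sg.
by rewrite ltr0_sg.
Qed.

Lemma motzkin s a : (forall i, s i = 0 \/ s i = 1 \/ s i = -1) ->
  ~ (exists x, forall i, Num.sg (dotv (u i) x - a i) = s i) ->
  exists l, Obs l s a.
Proof.
move=> hs hno.
have glin : linf (fun y : Yt => - y.2).
  by move=> c y z /=; rewrite opprD -mulrN.
have hF : ~ (exists y : Yt, (forall j, (j < (m + m).+1)%N -> 0 <= ffs s a j y) /\ - y.2 < 0).
  move=> [[[x t] sv] [hy /= hsv]].
  have sv0 : 0 < sv by rewrite -oppr_lt0.
  have ht : sv <= t.
    have := hy (m + m)%N (ltnSn _).
    rewrite /ffs insubF ?ltnNge ?leq_addr // insubF ?addKn ?ltnn // eqxx /yx /yt /ys /= subr_ge0 //.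
  have t0 : 0 < t by apply: lt_le_trans ht.
  apply: hno; exists (t^-1 *: x) => i.
  have h1 := hy i (leq_trans (ltn_ord i) (leq_trans (leq_addr m m) (leqnSn _))).
  have h2 : (0 <= ffs s a (m + i)%N ((x, t), sv)).
    by apply: hy; rewrite ltnS leq_add2l ltnW.
  move: h1 h2; rewrite /ffs valK insubF ?ltnNge ?leq_addr // addKn valK /yx /yt /ys /=.
  have -> : dotv (u i) (t^-1 *: x) - a i = t^-1 * (dotv (u i) x - a i * t).
    by rewrite dotvZr; field; rewrite gt_eqF.
  rewrite sgrM gtr0_sg ?invr_gt0 // mul1r.
  case: ifP => [/eqP si0 h1 h2|si0 h1 _].
    rewrite si0; apply/eqP; rewrite sgr_eq0; apply/eqP.
    lra.
  apply: sg_pos_eq.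
    by case: (hs i) => [/eqP|]; [rewrite si0|].
  by apply: lt_le_trans sv0 _; rewrite -subr_ge0.
have [mu [mu0 hmu]] := farkas (ffs_lin s a) glin hF.
pose l := lamf s mu.
have key : forall x (t sv : R), - sv = dotv (\sum_i l i *: u i) x - t * (\sum_i l i * a i)
     - sv * (\sum_i nzm s mu i) + mu (m + m)%N * (t - sv).
  move=> x t sv; have := hmu ((x, t), sv); rewrite ffs_sum /yx /yt /ys /= => e; rewrite {1}e.
  rewrite (eq_bigr (fun i => dotv (l i *: u i) x - t * (l i * a i) - sv * nzm s mu i)); last first.
    by move=> i _; rewrite dotvZl /l; ring.
  by rewrite dotv_suml !mulr_sumr -!sumrB.
have dep : \sum_i l i *: u i = 0.
  apply: dotv_self_eq0; have := key (\sum_i l i *: u i) 0 0.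
  lra.
have hA : \sum_i l i * a i = mu (m + m)%N.
  have := key 0 1 0; rewrite dotv0r; lra.
have hB : \sum_i nzm s mu i + mu (m + m)%N = 1.
  have := key 0 0 1; rewrite dotv0r; lra.
exists l; split => //.
  move=> i; rewrite /l /lamf; case: ifP => [/eqP->|_]; first by rewrite mulr0.
  by rewrite -mulrA mulr_ge0 // -expr2 sqr_ge0.
have [[i [si li]]|hn] := pselect (exists i, s i != 0 /\ mu i != 0).
  left; split; last by rewrite hA.
  exists i; split => //; rewrite /l /lamf (negbTE si) mulf_neq0 //.
right.
have hz : forall i, s i != 0 -> mu i = 0.
  move=> i si; apply/eqP; apply: contraT => mi; exfalso; apply: hn; exists i; by split.
split.
  by move=> i si; rewrite /l /lamf (negbTE si) hz // mul0r.
rewrite hA; move: hB; rewrite big1 ?add0r => [->|i _]; first exact: oner_neq0.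
by rewrite /nzm; case: ifP => // /negbT /hz.
Qed.

End Motzkin.

Section Circ.
Variables (R : realType) (n m : nat) (u : 'I_m -> 'rV[R]_n).

Definition dep (l : 'I_m -> R) := \sum_i l i *: u i = 0.
Definition conf (g l : 'I_m -> R) := forall i, (l i = 0 -> g i = 0) /\ 0 <= g i * l i.
Definition supp (l : 'I_m -> R) : {set 'I_m} := [set i | l i != 0].

Lemma free_dep0 (D : {set 'I_m}) l : free [seq u i | i in D] -> dep l ->
  (forall i, l i != 0 -> i \in D) -> forall i, l i = 0.
Proof.
move=> hf hd hD i; apply/eqP; apply: contraT => li.
have iD := hD _ li.
set s := [seq u i | i in D].
have /freeP hf' : free (in_tuple s) by [].
pose k := fun j : 'I_(size s) => l (nth i (enum D) j).
have hk : \sum_(j < size s) k j *: (in_tuple s)`_j = 0.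
  have sz : size s = size (enum D) by rewrite size_map.
  pose F := fun j : nat => l (nth i (enum D) j) *: nth 0 s j.
  rewrite (_ : \sum_(j < size s) _ = \sum_(j < size s) F j) //.
  rewrite -(big_mkord xpredT F) sz.
  rewrite (eq_big_nat _ _ (F2 := fun j => l (nth i (enum D) j) *: u (nth i (enum D) j))); last first.
    by move=> j /andP[_ hj]; rewrite /F (nth_map i).
  rewrite -(big_nth i xpredT (fun y => l y *: u y)) big_enum /=.
  have e2 : \sum_(y | y \notin D) l y *: u y = 0.
    apply: big1 => y yD; have -> : l y = 0.
      by apply/eqP; apply: contraT => /hD; rewrite (negbTE yD).
    by rewrite scale0r.
  by move: hd; rewrite /dep (bigID (mem D)) /= e2 addr0.
have iE : (index i (enum D) < size s)%N by rewrite size_map index_mem mem_enum.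
have := hf' _ hk (Ordinal iE); rewrite /k /= nth_index ?mem_enum // => h.
by rewrite h eqxx in li.
Qed.

Lemma dep_circuit l : dep l -> (exists i, l i != 0) -> ~~ free [seq u i | i in supp l].
Proof.
move=> hd [i li]; apply/negP => hf.
have h : forall j, l j = 0 by apply: (free_dep0 hf hd) => j hj; rewrite inE.
by rewrite h eqxx in li.
Qed.

Lemma exists_circuit (D : {set 'I_m}) : ~~ free [seq u i | i in D] ->
  exists2 C : {set 'I_m}, C \subset D & circuit u C.
Proof.
move: {2}#|D| (leqnn #|D|) => N; elim: N D => [|N IH] D hD hf.
  move: hD; rewrite leqn0 cards_eq0 => /eqP D0; move: hf.
  by rewrite D0 /image_mem enum_set0 nil_free.
have [h|h] := pselect (forall E : {set 'I_m}, E \proper D -> free [seq u i | i in E]).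
  by exists D => //; split.
have [E /not_implyP [ED hE]] := (existsNP _).2 h.
have [|C CE hC] := IH E _ (introN idP hE).
  by rewrite -ltnS; apply: leq_trans hD; apply: proper_card.
exists C => //; exact: (fintype.subset_trans CE (proper_sub ED)).
Qed.

Lemma sq_gt0 (x : R) : x != 0 -> 0 < x * x.
Proof.
move=> hx; have : 0 < `|x| * `|x| by rewrite mulr_gt0 // normr_gt0.
by rewrite -normrM ger0_norm // -expr2 sqr_ge0.
Qed.

Lemma conf_trans g h l : conf g h -> conf h l -> conf g l.
Proof.
move=> gh hl i; have [h1 h2] := gh i; have [h3 h4] := hl i; split.
  by move=> /h3 /h1.
have [hi0|hi0] := eqVneq (h i) 0; first by rewrite h1 // mul0r.
have hh : 0 < h i * h i by rewrite sq_gt0.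
have := mulr_ge0 h2 h4.
rewrite (_ : g i * h i * (h i * l i) = (g i * l i) * (h i * h i)); last by ring.
by rewrite pmulr_lge0.
Qed.

Lemma conf_refl l : conf l l.
Proof. by move=> i; split => //; rewrite -expr2 sqr_ge0. Qed.

Lemma conf_sig g l (s : 'I_m -> R) : conf g l -> (forall i, 0 <= l i * s i) ->
  forall i, 0 <= g i * s i.
Proof.
move=> gl ls i; have [h1 h2] := gl i; have h4 := ls i.
have [hi0|hi0] := eqVneq (l i) 0; first by rewrite h1 // mul0r.
have hh : 0 < l i * l i by rewrite sq_gt0.
have := mulr_ge0 h2 h4.
rewrite (_ : g i * l i * (l i * s i) = (g i * s i) * (l i * l i)); last by ring.
by rewrite pmulr_lge0.
Qed.

Lemma reduce (al be : 'I_m -> R) i0 : 0 < al i0 * be i0 ->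
  (forall i, al i = 0 -> be i = 0) ->
  exists t, [/\ 0 < t, (exists j, al j != 0 /\ al j - t * be j = 0) &
     conf (fun i => al i - t * be i) al].
Proof.
move=> h0 hz.
pose P := fun i => 0 < al i * be i.
pose F := fun i => al i / be i.
have [j Pj jmin] := @arg_minP _ _ _ i0 P F h0.
have bj : be j != 0 by apply/eqP => e; move: Pj; rewrite /P e mulr0 ltxx.
have aj : al j != 0 by apply/eqP => e; move: Pj; rewrite /P e mul0r ltxx.
have hF : 0 < F j.
  have hbb := sq_gt0 bj.
  by rewrite -(pmulr_lgt0 _ hbb) /F mulrA divfK.
exists (F j); split => //.
- by exists j; split => //; rewrite /F divfK // subrr.
move=> i; split; first by move=> ai; rewrite ai (hz _ ai) mulr0 subrr.
have [Pi|nPi] := boolP (P i).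
  have := jmin i Pi; rewrite /F => hle.
  have bi : be i != 0 by apply/eqP => e; move: Pi; rewrite /P e mulr0 ltxx.
  rewrite mulrBl subr_ge0.
  have : al j / be j * (al i * be i) <= al i / be i * (al i * be i).
    by rewrite ler_pM2r.
  rewrite (_ : al i / be i * (al i * be i) = al i * al i); last by field.
  by rewrite (_ : al j / be j * be i * al i = al j / be j * (al i * be i)) //; ring.
rewrite mulrBl (_ : F j * be i * al i = F j * (al i * be i)); last by ring.
rewrite /P -leNgt in nPi.
have : F j * (al i * be i) <= 0 by rewrite pmulr_rle0.
have := sqr_ge0 (al i); rewrite expr2; lra.
Qed.

Lemma supp_lt g l : conf g l -> (exists j, l j != 0 /\ g j = 0) ->
  (#|supp g| < #|supp l|)%N.
Proof.
move=> gl [j [lj gj]]; apply: proper_card; rewrite finset.properEneq; apply/andP; split.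
  apply/eqP => e; have : j \in supp g by rewrite e inE.
  by rewrite inE gj eqxx.
apply/fintype.subsetP => i; rewrite !inE; apply: contra => /eqP li.
by have [/(_ li) -> _] := gl i.
Qed.

Lemma dep_lin x y t : dep x -> dep y -> dep (fun i => x i - t * y i).
Proof.
rewrite /dep => hx hy.
rewrite (eq_bigr (fun i => x i *: u i - t *: (y i *: u i))); last first.
  by move=> i _; rewrite scalerBl scalerA.
by rewrite sumrB -scaler_sumr hx hy scaler0 subr0.
Qed.

Lemma dep_scale x t : dep x -> dep (fun i => t * x i).
Proof.
rewrite /dep => hx; rewrite (eq_bigr (fun i => t *: (x i *: u i))); last first.
  by move=> i _; rewrite scalerA.
by rewrite -scaler_sumr hx scaler0.
Qed.

End Circ.


Section Circ2.
Variables (R : realType) (n m : nat) (u : 'I_m -> 'rV[R]_n).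
Variables (c : {set 'I_m} -> 'rV[R]_m) (hc : circuit_vectors u c).

Lemma circ_conf nu : dep u nu -> (exists i, nu i != 0) ->
  exists C (mu : R), [/\ circuit u C, (exists i, mu * c C 0 i != 0) &
     conf (fun i => mu * c C 0 i) nu].
Proof.
move: {2}#|supp nu| (leqnn #|supp nu|) => N; elim: N nu => [|N IH] nu hN hd [i0 hi0].
  have : i0 \in supp nu by rewrite inE.
  by move: hN; rewrite leqn0 cards_eq0 => /eqP ->; rewrite inE.
have [C CS hC] := exists_circuit (dep_circuit hd (ex_intro _ i0 hi0)).
have [dC hdC] := hc hC.
have [i iC] : exists i, i \in C.
  apply/set0Pn; apply: contraT => /negPn /eqP C0; have := hC.1.
  by rewrite C0 /image_mem enum_set0 nil_free.
have di : c C 0 i != 0 by rewrite hdC.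
have nui : nu i != 0.
  by have := (fintype.subsetP CS) i iC; rewrite inE.
pose e : R := if 0 < nu i * c C 0 i then 1 else -1.
pose be := fun j => e * c C 0 j.
have hpos : 0 < nu i * be i.
  rewrite /be /e; case: ifP => [h|/negbT]; first by rewrite mul1r.
  rewrite -leNgt le_eqVlt mulf_eq0 (negbTE nui) (negbTE di) /= => h.
  by rewrite mulN1r mulrN oppr_gt0.
have hz : forall j, nu j = 0 -> be j = 0.
  move=> j nj; rewrite /be; have : j \notin C.
    apply/negP => jC; have := (fintype.subsetP CS) j jC.
    by rewrite inE nj eqxx.
  by rewrite -hdC negbK => /eqP ->; rewrite mulr0.
have [t [t0 [j [nj gj]] hconf]] := reduce hpos hz.
have depbe : dep u be by apply: dep_scale.
have [hall|] := pselect (forall j, nu j - t * be j = 0).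
  exists C, (t * e); split => //.
    exists i; rewrite -mulrA; apply/eqP => h.
    by move: (hall i); rewrite /be h subr0 => /eqP; rewrite (negbTE nui).
  move=> k /=; have -> : t * e * c C 0 k = nu k by have := hall k; rewrite /be; lra.
  exact: (conf_refl nu k).
move=> /existsNP [k hk].
have hlt := supp_lt hconf (ex_intro _ j (conj nj gj)).
have [|||C' [mu' [hC' hnz hconf']]] := IH (fun j => nu j - t * be j).
- by rewrite -ltnS; apply: leq_trans hlt hN.
- exact: dep_lin.
- by exists k; apply/eqP.
exists C', mu'; split => //; exact: conf_trans hconf' hconf.
Qed.

Lemma obs_circuit l s a : Obs u l s a ->
  exists C (mu : R), circuit u C /\ Obs u (fun i => mu * c C 0 i) s a.
Proof.
move: {2}#|supp l| (leqnn #|supp l|) => N; elim: N l => [|N IH] l hN [hd hls hcase].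
  exfalso; move: hN; rewrite leqn0 cards_eq0 => /eqP hs.
  have l0 : forall i, l i = 0.
    move=> i; apply/eqP; apply: contraT => li.
    have : i \in supp l by rewrite inE.
    by rewrite hs inE.
  case: hcase => [[[i [_ li]] _]|[_]]; first by rewrite l0 eqxx in li.
  by rewrite big1 ?eqxx // => i _; rewrite l0 mul0r.
have [i0 li0] : exists i, l i != 0.
  case: hcase => [[[i [_ li]] _]|[_ Sl]]; first by exists i.
  have [h|hn] := pselect (exists i, l i != 0); first exact h.
  exfalso; apply: (negP Sl); apply/eqP; apply: big1 => i _.
  have -> : l i = 0 by apply/eqP; apply: contraT => li; case: hn; exists i.
  by rewrite mul0r.
have [C [mu [hC [i1 hi1] hconf]]] := circ_conf hd (ex_intro _ i0 li0).
pose nu := fun i => mu * c C 0 i.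
have li1 : l i1 != 0 by apply/eqP => h; have [/(_ h) /eqP] := hconf i1; rewrite (negbTE hi1).
have hpos : 0 < l i1 * nu i1.
  have [_ h] := hconf i1; rewrite lt_def mulf_neq0 //= mulrC //.
have hz : forall j, l j = 0 -> nu j = 0 by move=> j /(proj1 (hconf j)).
have [t [t0 [j [lj gj]] hconf2]] := reduce hpos hz.
pose ga := fun i => l i - t * nu i.
have hlt : (#|supp ga| < #|supp l|)%N := supp_lt hconf2 (ex_intro _ j (conj lj gj)).
have depnu : dep u nu by apply: dep_scale; exact: (hc hC).1.
have depga : dep u ga by exact: dep_lin.
have nus := conf_sig hconf hls.
have gas := conf_sig hconf2 hls.
have Sga : \sum_i ga i * a i = \sum_i l i * a i - t * \sum_i nu i * a i.
  rewrite (eq_bigr (fun i => l i * a i - t * (nu i * a i))) => [|i _].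
    by rewrite sumrB mulr_sumr.
  by rewrite /ga; ring.
have doneNu : ((exists i, s i != 0 /\ nu i != 0) /\ 0 <= \sum_i nu i * a i \/
    (forall i, s i != 0 -> nu i = 0) /\ \sum_i nu i * a i != 0) ->
    exists C (mu : R), circuit u C /\ Obs u (fun i => mu * c C 0 i) s a.
  by move=> h; exists C, mu; split => //; split.
have doneGa : ((exists i, s i != 0 /\ ga i != 0) /\ 0 <= \sum_i ga i * a i \/
    (forall i, s i != 0 -> ga i = 0) /\ \sum_i ga i * a i != 0) ->
    exists C (mu : R), circuit u C /\ Obs u (fun i => mu * c C 0 i) s a.
  move=> h; have og : Obs u ga s a by split.
  have hN' : (#|supp ga| <= N)%N by rewrite -ltnS; apply: leq_trans hlt hN.
  exact: IH hN' og.
have notex : forall f : 'I_m -> R, ~ (exists i, s i != 0 /\ f i != 0) ->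
    forall i, s i != 0 -> f i = 0.
  move=> f hn i si; apply/eqP; apply: contraT => fi; exfalso; apply: hn.
  by exists i.
case: hcase => [[[i [si li]] Sl0]|[hzl Sl]].
  have [[k [sk nk]]|hn] := pselect (exists i, s i != 0 /\ nu i != 0).
    have [Snu|Snu] := leP 0 (\sum_i nu i * a i).
      by apply: doneNu; left; split => //; exists k.
    have Sg : 0 < \sum_i ga i * a i.
      rewrite Sga; have : t * \sum_i nu i * a i < 0 by rewrite pmulr_rlt0.
      lra.
    have [hg|hg] := pselect (exists i, s i != 0 /\ ga i != 0).
      by apply: doneGa; left; split => //; apply: ltW.
    by apply: doneGa; right; split; [exact: notex|rewrite gt_eqF].
  have [Snu|Snu] := eqVneq (\sum_i nu i * a i) 0.
    apply: doneGa; left; split.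
      exists i; split => //; rewrite /ga (notex _ hn i si) mulr0 subr0 //.
    by rewrite Sga Snu mulr0 subr0.
  by apply: doneNu; right; split => //; exact: notex.
have nuz : forall i, s i != 0 -> nu i = 0 by move=> i /hzl /hz.
have [Snu|Snu] := eqVneq (\sum_i nu i * a i) 0.
  apply: doneGa; right; split.
    by move=> i si; rewrite /ga hzl // nuz // mulr0 subr0.
  by rewrite Sga Snu mulr0 subr0.
by apply: doneNu; right.
Qed.

Lemma sum_lf l (x : 'rV[R]_n) (a : 'I_m -> R) :
  \sum_i l i * (dotv (u i) x - a i) = dotv (\sum_i l i *: u i) x - \sum_i l i * a i.
Proof.
rewrite dotv_suml -sumrB; apply: eq_bigr => i _; rewrite dotvZl; ring.
Qed.

Lemma obs_infeasible l s a : Obs u l s a ->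
  ~ exists x, forall i, Num.sg (dotv (u i) x - a i) = s i.
Proof.
move=> [hd hls hcase] [x hx].
have := sum_lf l x a; rewrite hd dotv0l sub0r => hsum.
have term : forall i, 0 <= l i * (dotv (u i) x - a i).
  move=> i; rewrite [X in _ * X]numEsg hx mulrA mulr_ge0 //.
case: hcase => [[[i [si li]] Sl0]|[hz Sl]].
  have fi : dotv (u i) x - a i != 0 by rewrite -sgr_eq0 hx.
  have ti : 0 < l i * (dotv (u i) x - a i).
    by rewrite lt_def mulf_neq0 // term.
  have : 0 < \sum_i l i * (dotv (u i) x - a i).
    rewrite (bigD1 i) //=; apply: (lt_le_trans ti); rewrite lerDl.
    by apply: sumr_ge0 => j _; apply: term.
  rewrite hsum; lra.
move: Sl; rewrite -oppr_eq0 -hsum big1 ?eqxx // => i _.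
have [si|si] := eqVneq (s i) 0.
  by have := hx i; rewrite si => /eqP; rewrite sgr_eq0 => /eqP ->; rewrite mulr0.
by rewrite hz // mul0r.
Qed.

Lemma sg_vals (r : R) : Num.sg r = 0 \/ Num.sg r = 1 \/ Num.sg r = -1.
Proof. by case: sgrP; auto. Qed.

Lemma core (a b : 'rV[R]_m) :
  (forall C, circuit u C -> Num.sg (dotv (c C) a) = Num.sg (dotv (c C) b)) ->
  forall x, exists x', forall i,
    Num.sg (dotv (u i) x - a 0 i) = Num.sg (dotv (u i) x' - b 0 i).
Proof.
move=> hab x.
pose s := fun i => Num.sg (dotv (u i) x - a 0 i).
have [[x' hx']|hno] := pselect (exists x', forall i, Num.sg (dotv (u i) x' - b 0 i) = s i).
  by exists x' => i; rewrite hx'.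
exfalso.
have [l hl] := motzkin (fun i => sg_vals _) hno.
have [C [mu [hC [hd hs hcase]]]] := obs_circuit hl.
have sE : forall (z : 'rV[R]_m), \sum_i mu * c C 0 i * z 0 i = mu * dotv (c C) z.
  by move=> z; rewrite /dotv mulr_sumr; apply: eq_bigr => i _; rewrite mulrA.
apply: (@obs_infeasible (fun i => mu * c C 0 i) s (fun i => a 0 i)); last by exists x.
split => //; rewrite sE; move: hcase; rewrite sE.
have ge : (0 <= mu * dotv (c C) b) = (0 <= mu * dotv (c C) a).
  by rewrite -sgr_ge0 sgrM -hab // -sgrM sgr_ge0.
have ne : (mu * dotv (c C) b != 0) = (mu * dotv (c C) a != 0).
  by rewrite -sgr_eq0 sgrM -hab // -sgrM sgr_eq0.
by rewrite ge ne.
Qed.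

End Circ2.

Section Topo.
Variable R : realType.

Lemma dotv_cont k (w : 'rV[R]_k) : continuous (fun z : 'rV[R]_k => dotv w z).
Proof.
move=> x; rewrite /dotv.
elim: (index_enum _) => [|h r IH].
  have -> : (fun z : 'rV[R]_k => \sum_(i <- [::]) w 0 i * z 0 i) = cst 0.
    by apply/funext => z; rewrite big_nil.
  exact: cst_continuous.
have -> : (fun z : 'rV[R]_k => \sum_(i <- h :: r) w 0 i * z 0 i) =
   (fun z : 'rV[R]_k => w 0 h * z 0 h) + (fun z => \sum_(j <- r) w 0 j * z 0 j).
  by apply/funext => z; rewrite big_cons.
apply: continuousD => //.
apply: continuousM; [exact: cst_continuous|exact: coord_continuous].
Qed.

Lemma nbhs_sgR (r : R) : r != 0 -> nbhs r [set s | Num.sg s = Num.sg r].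
Proof.
move=> r0; apply/nbhs_ballP; exists `|r|; first by rewrite /= normr_gt0.
move=> s; rewrite -ball_normE /= => h.
have [rp|rn] := ltP 0 r.
  move: h; rewrite (gtr0_norm rp) ltr_norml => /andP[h1 h2].
  rewrite (gtr0_sg rp) gtr0_sg //; lra.
have rlt : r < 0 by rewrite lt_neqAle r0.
move: h; rewrite (ltr0_norm rlt) ltr_norml => /andP[h1 h2].
rewrite (ltr0_sg rlt) ltr0_sg //; lra.
Qed.

Lemma nbhs_sg k (f : 'rV[R]_k -> R) x : continuous f -> f x != 0 ->
  nbhs x [set z | Num.sg (f z) = Num.sg (f x)].
Proof.
move=> hf fx; have := hf x; move/(_ _ (nbhs_sgR fx)) => //.
Qed.

Lemma sg_comb (a b t : R) : 0 < t -> t < 1 ->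
  (Num.sg a = 0 \/ Num.sg a = Num.sg b) -> Num.sg ((1 - t) * a + t * b) = Num.sg b.
Proof.
move=> t0 t1 h.
have t1' : 0 < 1 - t by rewrite subr_gt0.
have [bp|bn|b0] := ltgtP b 0.
- have ha : a <= 0.
    by rewrite -sgr_le0; case: h => ->; [|rewrite ltr0_sg].
  have : (1 - t) * a <= 0 by rewrite pmulr_rle0.
  have : t * b < 0 by rewrite pmulr_rlt0.
  by move=> h1 h2; rewrite (ltr0_sg bp) ltr0_sg //; lra.
- have ha : 0 <= a.
    by rewrite -sgr_ge0; case: h => ->; [|rewrite gtr0_sg].
  have : 0 <= (1 - t) * a by rewrite pmulr_rge0.
  have : 0 < t * b by rewrite pmulr_rgt0.
  by move=> h1 h2; rewrite (gtr0_sg bn) gtr0_sg //; lra.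
- have ha : a = 0 by case: h => /eqP; rewrite ?b0 ?sgr0 sgr_eq0 => /eqP.
  by rewrite ha b0 !mulr0 addr0.
Qed.

Section Arr.
Variables (k : nat) (I : finType) (A : set I) (w : I -> 'rV[R]_k) (d : I -> R).

Definition fv x i := dotv (w i) x - d i.
Definition sv x i := Num.sg (fv x i).
Definition Of x := [set y | same_sign A w d x y].
Definition Cl x := [set y | forall i, A i -> sv y i = 0 \/ sv y i = sv x i].
Definition sle (s t : I -> R) := forall i, A i -> s i = 0 \/ s i = t i.

Lemma fv_cont i : continuous (fun z => fv z i).
Proof.
move=> x; rewrite /fv; apply: (@continuousB _ _ _ (fun z => dotv (w i) z) (cst (d i))).
  exact: dotv_cont.
exact: cst_continuous.
Qed.

Lemma fv_comb x y t i : fv (y + t *: (x - y)) i = (1 - t) * fv y i + t * fv x i.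
Proof. rewrite /fv dotvDr dotvZr dotvBr; ring. Qed.

Lemma closure_Of x : closure (Of x) = Cl x.
Proof.
apply/seteqP; split => y.
  move=> hy i Ai; have [h|h] := eqVneq (sv y i) 0; first by left.
  right; apply/eqP; apply: contraT => hne.
  have fy : fv y i != 0 by rewrite -sgr_eq0.
  have [z [hz1 hz2]] := hy _ (nbhs_sg (@fv_cont i) fy).
  move: hz2; rewrite /= -(hz1 i Ai) => e.
  by rewrite /sv -e eqxx in hne.
move=> hy B /nbhs_ballP [e /= e0 hB].
set N := `|x - y|.
have N0 : 0 <= N by apply: normr_ge0.
pose t := e / (e + 2 * (N + 1)).
have D0 : 0 < e + 2 * (N + 1) by lra.
have t0 : 0 < t by rewrite divr_gt0.
have t1 : t < 1 by rewrite ltr_pdivrMr // mul1r; lra.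
exists (y + t *: (x - y)); split.
  move=> i Ai; rewrite /= -/(fv x i) -/(fv _ i) fv_comb sg_comb //.
  exact: hy.
apply: hB; rewrite -ball_normE /= opprD addNKr normrN normrZ gtr0_norm //.
rewrite -/N /t mulrAC ltr_pdivrMr // ltr_pM2l //; lra.
Qed.

Lemma Cl_self x : Cl x x.
Proof. by move=> i _; right. Qed.

Lemma facesE F : arr_faces A w d F <-> exists x, F = Cl x.
Proof.
split.
  by move=> [Op [x ->] <-]; exists x; rewrite -closure_Of.
by move=> [x ->]; exists (Of x); [exists x|rewrite closure_Of].
Qed.

Lemma Cl_subP x1 x2 : Cl x1 `<=` Cl x2 <-> sle (sv x1) (sv x2).
Proof.
split; first by move=> h; apply: h; exact: Cl_self.
move=> h y hy i Ai; case: (hy i Ai) => [->|->]; first by left.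
exact: h.
Qed.

Lemma sle_antisym s t : sle s t -> sle t s -> forall i, A i -> s i = t i.
Proof. by move=> h1 h2 i Ai; case: (h1 i Ai) => // si; case: (h2 i Ai) => // ->. Qed.

Lemma Cl_ext x1 x2 : (forall i, A i -> sv x1 i = sv x2 i) -> Cl x1 = Cl x2.
Proof.
move=> h; apply/seteqP; split => y hy i Ai; rewrite ?h //; case: (hy i Ai); auto;
  by rewrite h //; auto.
Qed.

Lemma Cl_eq_sv x1 x2 : Cl x1 = Cl x2 -> forall i, A i -> sv x1 i = sv x2 i.
Proof.
move=> e; apply: sle_antisym; apply/Cl_subP; rewrite e //.
Qed.

End Arr.

End Topo.


Section Iso.
Variable R : realType.
Variables (I : finType) (A : set I) (k1 k2 : nat) (w1 : I -> 'rV[R]_k1) (d1 : I -> R)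
  (w2 : I -> 'rV[R]_k2) (d2 : I -> R).
Hypotheses (h12 : forall x, exists x', forall i, A i -> sv w1 d1 x i = sv w2 d2 x' i)
           (h21 : forall x', exists x, forall i, A i -> sv w1 d1 x i = sv w2 d2 x' i).

Definition Psi (F : set 'rV[R]_k1) : set 'rV[R]_k2 :=
  [set y | exists x x', [/\ F = Cl A w1 d1 x,
     (forall i, A i -> sv w1 d1 x i = sv w2 d2 x' i) & Cl A w2 d2 x' y]].

Lemma Psi_Cl x x' : (forall i, A i -> sv w1 d1 x i = sv w2 d2 x' i) ->
  Psi (Cl A w1 d1 x) = Cl A w2 d2 x'.
Proof.
move=> h; apply/seteqP; split => y.
  move=> [x1 [x1' [e h1 hy]]].
  have e1 := Cl_eq_sv e.
  have e2 : Cl A w2 d2 x' = Cl A w2 d2 x1'.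
    by apply: Cl_ext => i Ai; rewrite -h // e1 // h1.
  by rewrite e2.
by move=> hy; exists x, x'; split.
Qed.

Lemma Psi_iso_props :
  [/\ (forall F, arr_faces A w1 d1 F -> arr_faces A w2 d2 (Psi F)),
      (forall F G, arr_faces A w1 d1 F -> arr_faces A w1 d1 G -> Psi F = Psi G -> F = G),
      (forall G', arr_faces A w2 d2 G' -> exists2 F, arr_faces A w1 d1 F & Psi F = G') &
      (forall F G, arr_faces A w1 d1 F -> arr_faces A w1 d1 G ->
         (F `<=` G <-> Psi F `<=` Psi G))].
Proof.
split.
- move=> F /facesE [x ->]; have [x' hx'] := h12 x.
  by rewrite (Psi_Cl hx'); apply/facesE; exists x'.
- move=> F G /facesE [x1 ->] /facesE [x2 ->].
  have [x1' h1] := h12 x1; have [x2' h2] := h12 x2.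
  rewrite (Psi_Cl h1) (Psi_Cl h2) => /Cl_eq_sv e.
  by apply: Cl_ext => i Ai; rewrite h1 // h2 // e.
- move=> G' /facesE [x' ->]; have [x hx] := h21 x'.
  by exists (Cl A w1 d1 x); [apply/facesE; exists x|rewrite (Psi_Cl hx)].
- move=> F G /facesE [x1 ->] /facesE [x2 ->].
  have [x1' h1] := h12 x1; have [x2' h2] := h12 x2.
  rewrite (Psi_Cl h1) (Psi_Cl h2) !Cl_subP.
  split => h i Ai.
    by rewrite -h1 // -h2 //; exact: h.
  by rewrite h1 // h2 //; exact: h.
Qed.

Lemma iso_of : poset_iso (arr_faces A w1 d1) (arr_faces A w2 d2).
Proof. by have [? ? ? ?] := Psi_iso_props; exists Psi; split. Qed.

End Iso.

Section NF.
Variable R : realType.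
Variables (k : nat) (I : finType) (w : I -> 'rV[R]_k).

Definition Tan (s t : I -> R) (dd : 'rV[R]_k) := forall i,
  (s i = 0 -> dotv (w i) dd = 0) /\ (t i = 0 -> 0 <= s i * dotv (w i) dd).
Definition Ncone s t := [set v : 'rV[R]_k | forall dd, Tan s t dd -> dotv v dd <= 0].

Lemma sg_perturb (f e : R) : `|e| < `|f| -> Num.sg (f + e) = Num.sg f.
Proof.
move=> h; have [fp|fn|f0] := ltgtP f 0.
- rewrite (ltr0_sg fp) ltr0_sg //; move: h; rewrite (ltr0_norm fp) ltr_norml; lra.
- rewrite (gtr0_sg fn) gtr0_sg //; move: h; rewrite (gtr0_norm fn) ltr_norml; lra.
- by move: h; rewrite f0 normr0 ltNge normr_ge0.
Qed.

Variables (d : I -> R) (x0 : 'rV[R]_k).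
Let P := Cl setT w d x0.
Let sig := sv w d x0.

Lemma sfv_ge0 z : P z -> forall i, 0 <= sig i * fv w d z i.
Proof.
move=> hz i; case: (hz i Logic.I) => e.
  by move/eqP: e; rewrite sgr_eq0 => /eqP ->; rewrite mulr0.
by rewrite /sig -e /sv -normrEsg.
Qed.

Lemma sup_iff x v : P x ->
  ((dotv v x)%:E = support_fun P v <-> forall z, P z -> dotv v z <= dotv v x).
Proof.
move=> hx; rewrite /support_fun; split.
  move=> e z hz; rewrite -lee_fin e; apply: ereal_sup_ubound; by exists z.
move=> h; apply/eqP; rewrite eq_le; apply/andP; split.
  by apply: ereal_sup_ubound; exists x.
by apply: ge_ereal_sup => _ [z hz <-]; rewrite lee_fin; apply: h.
Qed.

Lemma sv0 z i : sv w d z i = 0 -> fv w d z i = 0.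
Proof. by move/eqP; rewrite sgr_eq0 => /eqP. Qed.

Lemma ncone x : P x -> normal_cone P x = Ncone sig (sv w d x).
Proof.
move=> hx; apply/seteqP; split => v; rewrite /normal_cone /=.
  move=> /(sup_iff v hx) hle dd hdd.
  pose f := fun i => fv w d x i.
  pose S := \sum_i (if f i == 0 then 0 else (`|dotv (w i) dd| + 1) / `|f i|).
  have S0 : 0 <= S.
    by apply: sumr_ge0 => i _; case: ifP => // _; apply: divr_ge0.
  pose eps := (1 + S)^-1.
  have eps0 : 0 < eps by rewrite invr_gt0; lra.
  have epsS : eps * S < 1.
    by rewrite mulrC ltr_pdivrMr ?mul1r; lra.
  have key : forall i, f i != 0 -> eps * `|dotv (w i) dd| < `|f i|.
    move=> i fi.
    have hT : (`|dotv (w i) dd| + 1) / `|f i| <= S.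
      rewrite /S (bigD1 i) //= (negbTE fi) lerDl.
      by apply: sumr_ge0 => j _; case: ifP => // _; apply: divr_ge0.
    have f0 : 0 < `|f i| by rewrite normr_gt0.
    move: hT; rewrite ler_pdivrMr // => hT.
    have := normr_ge0 (dotv (w i) dd); nra.
  have hz : P (x + eps *: dd).
    move=> i _.
    have e : fv w d (x + eps *: dd) i = f i + eps * dotv (w i) dd.
      by rewrite /f /fv dotvDr dotvZr; ring.
    rewrite /sv e.
    have [fi|fi] := eqVneq (f i) 0; last first.
      rewrite sg_perturb; last by rewrite normrM gtr0_norm // key.
      exact: (hx i Logic.I).
    rewrite fi add0r sgrM gtr0_sg // mul1r.
    have [_ h2] := hdd i.
    have hsx : sv w d x i = 0 by rewrite /sv -/(f i) fi sgr0.
    have := h2 hsx.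
    have [si|si] := eqVneq (sig i) 0.
      have [h1 _] := hdd i; by rewrite (h1 si) sgr0; left.
    have [wd|wd] := eqVneq (dotv (w i) dd) 0; first by rewrite wd sgr0; left.
    move=> hge; right; apply: sg_pos_eq.
      by case: (sg_vals (fv w d x0 i)) => [h|//]; rewrite /sig /sv h eqxx in si.
    by rewrite lt_def mulf_neq0.
  have := hle _ hz; rewrite dotvDr dotvZr gerDl pmulr_rle0 //.
move=> hv; apply/(sup_iff v hx) => z hz.
rewrite -subr_le0 -dotvBr; apply: hv => i; split.
  move=> si.
  have e1 : fv w d z i = 0.
    by apply: sv0; case: (hz i Logic.I) => // ->.
  have e2 : fv w d x i = 0.
    by apply: sv0; case: (hx i Logic.I) => // ->.
  by move: e1 e2; rewrite /fv dotvBr => e1 e2; lra.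
move=> /sv0 e2; have := sfv_ge0 hz i.
by move: e2; rewrite /fv dotvBr => e2; rewrite (_ : dotv (w i) z - dotv (w i) x = dotv (w i) z - d i); [|lra].
Qed.

Lemma dotvNl k' (v z : 'rV[R]_k') : dotv (- v) z = - dotv v z.
Proof. by rewrite -scaleN1r dotvZl mulN1r. Qed.

Lemma fv_aff (s : seq ('rV[R]_k * R)) i : \sum_(p <- s) p.2 = 1 ->
  fv w d (\sum_(p <- s) p.2 *: p.1) i = \sum_(p <- s) p.2 * fv w d p.1 i.
Proof.
move=> h1.
have -> : \sum_(p <- s) p.2 * fv w d p.1 i =
    \sum_(p <- s) p.2 * dotv (w i) p.1 - (\sum_(p <- s) p.2) * d i.
  by rewrite mulr_suml -sumrB; apply: eq_bigr => p _; rewrite /fv; ring.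
rewrite h1 mul1r /fv dotv_sumr.
by rewrite (eq_bigr (fun p => p.2 * dotv (w i) p.1)) // => p _; rewrite dotvZr.
Qed.

Lemma nfanE : normal_fan P = [set C | exists2 x, P x & C = Ncone sig (sv w d x)].
Proof.
apply/seteqP; split => C.
  move=> [G [cv [c0 [hvalid [hG hne]]]] [x [Gx _] ->]].
  have hx : P x by move: Gx; rewrite hG => -[].
  by exists x => //; rewrite ncone.
move=> [x hx ->].
pose J := fun i => fv w d x i == 0.
pose cv := - \sum_(i | J i) sig i *: w i.
pose c0 := - \sum_(i | J i) sig i * d i.
have e : forall z, \sum_(i | J i) sig i * fv w d z i =
    \sum_(i | J i) dotv (sig i *: w i) z - \sum_(i | J i) sig i * d i.
  by move=> z; rewrite -sumrB; apply: eq_bigr => i _; rewrite dotvZl /fv; ring.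
have hcv : forall z, dotv cv z - c0 = - \sum_(i | J i) sig i * fv w d z i.
  by move=> z; rewrite e /cv /c0 dotvNl dotv_suml; lra.
have Psum : forall z, P z -> 0 <= \sum_(i | J i) sig i * fv w d z i.
  by move=> z hz; apply: sumr_ge0 => i _; apply: sfv_ge0.
pose G := [set z | P z /\ dotv cv z = c0].
have Gx : G x.
  split => //; apply/eqP; rewrite -subr_eq0 hcv oppr_eq0; apply/eqP.
  by apply: big1 => i /eqP ->; rewrite mulr0.
have Gzero : forall g, G g -> forall i, J i -> fv w d g i = 0.
  move=> g [Pg hg] i Ji.
  have := hcv g; rewrite hg subrr => /eqP; rewrite eq_sym oppr_eq0.
  rewrite psumr_eq0; last by move=> j _; apply: sfv_ge0.
  move=> /allP /(_ i (mem_index_enum i)); rewrite Ji /= mulf_eq0 => /orP[/eqP si|/eqP //].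
  by apply: sv0; case: (Pg i Logic.I) => // ->.
exists G.
  exists cv, c0; split; last by split => //; exists x.
  by move=> z hz; rewrite -subr_le0 hcv oppr_le0; apply: Psum.
exists x; last by rewrite ncone.
split => //.
exists [set z | forall i, fv w d x i != 0 -> sv w d z i = sv w d x i].
  have hf : forall i, \forall z \near x, (fv w d x i != 0 -> sv w d z i = sv w d x i).
    move=> i; apply: (filter_imply (nbhs_filter x)) => hi.
    exact: nbhs_sg (@fv_cont _ _ _ w d i) hi.
  exact: (filter_forall (nbhs_filter x) hf).
move=> z [hN [sq [hsq hsum ez]]]; subst z.
have zJ : forall i, J i -> fv w d (\sum_(p <- sq) p.2 *: p.1) i = 0.
  move=> i Ji; rewrite fv_aff // big_seq big1 // => p hp.
  by rewrite Gzero ?mulr0 //; apply: hsq.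
have Pz : P (\sum_(p <- sq) p.2 *: p.1).
  move=> i _; have [Ji|Ji] := boolP (J i).
    by left; rewrite /sv zJ // sgr0.
  by rewrite hN //; exact: (hx i Logic.I).
split => //; apply/eqP; rewrite -subr_eq0 hcv oppr_eq0; apply/eqP.
by apply: big1 => i Ji; rewrite zJ // mulr0.
Qed.

End NF.

Section Final.
Variables (R : realType) (n m : nat) (u : 'I_m -> 'rV[R]_n).

Lemma dotv_lift (w : 'rV[R]_n) (a : R) (z : 'rV[R]_(n + 1)) :
  dotv (row_mx w (const_mx a : 'rV[R]_1)) z = dotv w (lsubmx z) + a * rsubmx z 0 0.
Proof. by rewrite -{1}(hsubmxK z) dotv_row_mx dotv_const1. Qed.

Lemma lift_real (a b : 'rV[R]_m) :
  (forall x, exists x', forall i,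
     Num.sg (dotv (u i) x - a 0 i) = Num.sg (dotv (u i) x' - b 0 i)) ->
  (forall x, exists x', forall i,
     Num.sg (dotv (u i) x - (- a) 0 i) = Num.sg (dotv (u i) x' - (- b) 0 i)) ->
  forall z : 'rV[R]_(n + 1), exists z' : 'rV[R]_(n + 1),
    Num.sg (rsubmx z 0 0) = Num.sg (rsubmx z' 0 0) /\
    forall j, Num.sg (dotv (row_mx (u j) (const_mx (a 0 j) : 'rV[R]_1)) z) =
              Num.sg (dotv (row_mx (u j) (const_mx (b 0 j) : 'rV[R]_1)) z').
Proof.
move=> hab hnab z.
set x := lsubmx z; set t := rsubmx z 0 0.
have [ht|ht|ht] := ltgtP t 0.
- have [x'' hx] := hab ((- t)^-1 *: x).
  exists (row_mx x'' (const_mx (-1))); split.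
    by rewrite row_mxKr mxE (ltr0_sg ht) sgrN1.
  move=> j; rewrite !dotv_lift row_mxKl row_mxKr -/x -/t [const_mx _ 0 0]mxE.
  have -> : dotv (u j) x + a 0 j * t = (- t) * (dotv (u j) ((- t)^-1 *: x) - a 0 j).
    by rewrite dotvZr; field; rewrite ?oppr_eq0 lt_eqF.
  rewrite sgrM gtr0_sg ?oppr_gt0 // mul1r hx; congr Num.sg; ring.
- have [x'' hx] := hnab (t^-1 *: x).
  exists (row_mx x'' (const_mx 1)); split.
    by rewrite row_mxKr mxE (gtr0_sg ht) sgr1.
  move=> j; rewrite !dotv_lift row_mxKl row_mxKr -/x -/t [const_mx _ 0 0]mxE.
  have -> : dotv (u j) x + a 0 j * t = t * (dotv (u j) (t^-1 *: x) - (- a) 0 j).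
    by rewrite dotvZr mxE; field; rewrite gt_eqF.
  rewrite sgrM gtr0_sg // mul1r hx mxE; congr Num.sg; ring.
- exists (row_mx x (const_mx 0)); split.
    by rewrite row_mxKr mxE -/t ht.
  by move=> j; rewrite !dotv_lift row_mxKl row_mxKr -/x -/t [const_mx _ 0 0]mxE ht !mulr0.
Qed.

End Final.

Unset Implicit Arguments.
Set Strict Implicit.
Set Printing Implicit Defensive.

Theorem theorem1p2 (R : realType) (n m : nat) (u : 'I_m -> 'rV[R]_n)
  (c : {set 'I_m} -> 'rV[R]_m) (F : set 'rV[R]_m) (a b : 'rV[R]_m) :
  (forall i, u i != 0) ->
  circuit_vectors u c ->
  derived_faces u c F ->
  derived_relint u c F a ->
  derived_relint u c F b ->
  [/\ normally_equiv_arr (transl_faces u a) (transl_faces u b),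
      poset_iso (transl_faces u a) (transl_faces u b),
      poset_iso (cone_faces u a) (cone_faces u b) &
      poset_iso (lift_faces u a) (lift_faces u b)].
Proof.
move=> _ hc _ ha hb.
have hab : forall C, circuit u C -> Num.sg (dotv (c C) a) = Num.sg (dotv (c C) b).
  move: ha hb => [Op [x eOx] [eO Oa]] [Op' [x' eOx'] [eO' Ob]].
  have e1 : Cl (circuit u) c (fun _ => 0) x = F by rewrite -closure_Of -eO eOx.
  have e2 : Cl (circuit u) c (fun _ => 0) x' = F by rewrite -closure_Of -eO' eOx'.
  move=> C hC; have := Cl_eq_sv (etrans e1 (esym e2)) hC.
  move: Oa Ob; rewrite eOx eOx' => Oa Ob.
  have := Oa C hC; have := Ob C hC; rewrite /sv /fv !subr0 => -> ->.
  done.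
have hba : forall C, circuit u C -> Num.sg (dotv (c C) b) = Num.sg (dotv (c C) a).
  by move=> C hC; rewrite hab.
have hnab : forall C, circuit u C ->
    Num.sg (dotv (c C) (- a)) = Num.sg (dotv (c C) (- b)).
  by move=> C hC; rewrite !dotvNr !sgrN hab.
have Hab := core hc hab.
have Hnab := core hc hnab.
have Hba := core hc hba.
have hnba : forall C, circuit u C ->
    Num.sg (dotv (c C) (- b)) = Num.sg (dotv (c C) (- a)).
  by move=> C hC; rewrite hnab.
have Hnba := core hc hnba.
have h12 : forall x, exists x', forall i, [set: 'I_m] i ->
    sv u (fun i => a 0 i) x i = sv u (fun i => b 0 i) x' i.
  by move=> x; have [x' hx'] := Hab x; exists x' => i _; exact: hx' i.
have h21 : forall x', exists x, forall i, [set: 'I_m] i ->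
    sv u (fun i => a 0 i) x i = sv u (fun i => b 0 i) x' i.
  by move=> x'; have [x hx] := Hba x'; exists x => i _; rewrite /sv /fv hx.
split.
- have [p1 p2 p3 p4] := Psi_iso_props h12 h21.
  eexists; split; [exact: p1|exact: p2|exact: p3|by move=> F1 G1 h1 h2; apply: (p4 F1 G1 h1 h2).1|].
  move=> F1 /facesE [x0 ->]; have [x0' hx0'] := h12 x0.
  rewrite (Psi_Cl hx0') /normally_equiv_poly !nfanE.
  have e0 : sv u (fun i => a 0 i) x0 = sv u (fun i => b 0 i) x0'.
    by apply/funext => i; apply: hx0'.
  apply/seteqP; split => C [x hx ->].
    have [x' hx'] := h12 x; exists x'.
      by move=> i _; rewrite -hx' // -hx0' //; exact: hx i Logic.I.
    by rewrite e0 (_ : sv u (fun i => a 0 i) x = sv u (fun i => b 0 i) x') //; apply/funext => i; apply: hx'.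
  have [x1 hx1] := h21 x; exists x1.
    by move=> i _; rewrite hx1 // hx0' //; exact: hx i Logic.I.
  by rewrite e0 (_ : sv u (fun i => a 0 i) x1 = sv u (fun i => b 0 i) x) //; apply/funext => i; apply: hx1.
- exact: iso_of h12 h21.
- have cN : forall (a' : 'rV[R]_m) (z : 'rV[R]_(n + 1)),
      dotv (cone_normal u a' None) z = rsubmx z 0 0.
    by move=> a' z; rewrite /cone_normal dotv_lift dotv0l add0r mul1r.
  apply: iso_of.
    move=> z; have [z' [h1 h2]] := lift_real Hab Hnab z.
    exists z' => -[j|] _; rewrite /sv /fv !subr0; first exact: h2.
    by rewrite !cN.
  move=> z'; have [z [h1 h2]] := lift_real Hba Hnba z'.
  exists z => -[j|] _; rewrite /sv /fv !subr0; first by rewrite /= h2.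
  by rewrite !cN.
- apply: iso_of.
    move=> z; have [z' [h1 h2]] := lift_real Hab Hnab z.
    by exists z' => j _; rewrite /sv /fv !subr0.
  move=> z'; have [z [h1 h2]] := lift_real Hba Hnba z'.
  by exists z => j _; rewrite /sv /fv !subr0 h2.
Qed.
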